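(* If $G$ is a $2$-free circular interval digraph on $n$ vertices, then $\tilde{P}_3(G) \leq n^3/16$.
   Context: Digraphs are finite, loopless, with at most one edge $uv$ per ordered pair of distinct vertices. A digraph is $2$-free if there are no distinct $u,v$ with both $uv$ and $vu$ edges. A digraph $G$ is a circular interval digraph if its vertices can be arranged in a circle such that for every triple $u,v,w$ of distinct vertices in clockwise order, if $uw \in E(G)$ then $uv, vw \in E(G)$. An induced $3$-vertex directed path is a triple $(a,b,c)$ of distinct vertices with $ab,bc$ edges and neither $ac$ nor $ca$ an edge; $\tilde{P}_3(G)$ is the number of these. *)

(* Defs.v *)
From mathcomp Require Import all_boot.
Set Implicit Arguments. Unset Strict Implicit. Unset Printing Implicit Defensive.

(* A digraph on a finite vertex type T is an edge relation e : rel T;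
   e u v means uv is an edge.  At most one edge per ordered pair is
   automatic.  Loopless: e is irreflexive. *)
Definition loopless (T : finType) (e : rel T) : Prop := forall u, ~~ e u u.

Definition two_free (T : finType) (e : rel T) : Prop :=
  forall u v, u != v -> ~~ (e u v && e v u).

(* Given positions p : T -> 'I_n (a bijection onto the circle positions
   0..n-1, clockwise), distinct u v w are in clockwise order iff their
   positions are cyclically increasing. *)
Definition cw (T : finType) (n : nat) (p : T -> 'I_n) (u v w : T) : bool :=
  [|| (p u < p v < p w), (p v < p w < p u) | (p w < p u < p v)].

Definition circular_interval (T : finType) (e : rel T) : Prop :=
  exists p : T -> 'I_#|T|, bijective p /\
    forall u v w : T, u != v -> v != w -> u != w ->
      cw p u v w -> e u w -> e u v && e v w.

Definition induced_P3 (T : finType) (e : rel T) (t : T * T * T) : bool :=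
  let: (a, b, c) := t in
  [&& a != b, b != c, a != c, e a b, e b c, ~~ e a c & ~~ e c a].

Definition P3count (T : finType) (e : rel T) : nat :=
  #|[set t : T * T * T | induced_P3 e t]|.

(* Main.v *)
Require Import Defs.
From mathcomp Require Import all_boot all_order all_algebra.
From mathcomp Require Import zify.
Import GRing.Theory Num.Theory.
Set Implicit Arguments. Unset Strict Implicit. Unset Printing Implicit Defensive.

Local Open Scope ring_scope.
Lemma keyI (K u m r : int) : K = (2 * m + r)%R -> (0 <= r <= 3)%R -> (0 <= m)%R ->
  (8 * (m * (m + 1)) + 8 * ((K - u) * u) <= (4 * m + r + 1) * (4 * m + r + 1))%R.
Proof.
move=> HK Hr Hm.
have : r = 0%R \/ r = 1%R \/ r = 2%R \/ r = 3%R by lia.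
case=> [H|[H|[H|H]]]; subst r K.
- have := sqr_ge0 (m - u)%R. nia.
- have := sqr_ge0 (2 * m + 1 - 2 * u)%R. nia.
- have := sqr_ge0 (m + 1 - u)%R. nia.
- have : (2 * m + 3 - 2 * u >= 1)%R \/ (2 * m + 3 - 2 * u <= -1)%R by lia. nia.
Qed.
Lemma arith_final (N q p M a b : int) :
  0 <= q -> 0 <= p -> q + p <= N - 1 -> 0 <= M -> 4 * M <= N - 1 <= 4 * M + 3 ->
  (q <= M /\ a = q) \/ (M <= q /\ a = M) -> (p <= M /\ b = p) \/ (M <= p /\ b = M) ->
  8 * (a * (a + 1) + (p - q) * a + (N - 1 - q - p) * (q - a) +
       ((q - p) * b + (N - 1 - q - p) * (p - b))) <= N * N.
Proof.
move=> hq hp hqp hM hN ha hb.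
have HK u := @keyI (N - 1 - 2 * M) u M (N - 1 - 4 * M) ltac:(lia) ltac:(lia) hM.
have eN : N = 4 * M + (N - 1 - 4 * M) + 1 by lia.
case: ha => -[ha1 ->]; case: hb => -[hb1 ->].
- have := HK 0. rewrite -eN. nia.
- have := HK (p - M). rewrite -eN. nia.
- have := HK (q - M). rewrite -eN. nia.
- have := HK (q + p - 2 * M). rewrite -eN. nia.
Qed.

Local Close Scope ring_scope.

Section Circ.
Variables (T : finType) (e : rel T).
Hypothesis Hl : loopless e.
Hypothesis H2 : two_free e.
Variable n : nat.
Variable pos : T -> 'I_n.
Hypothesis Hcard : #|T| = n.
Hypothesis Hbij : bijective pos.
Hypothesis Hint : forall u v w : T, u != v -> v != w -> u != w ->
      cw pos u v w -> e u w -> e u v && e v w.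

Definition P (x : T) : nat := pos x.

Lemma P_lt x : P x < n. Proof. exact: ltn_ord. Qed.
Lemma P_inj x y : P x = P y -> x = y.
Proof. move=> h; apply: (bij_inj Hbij); exact: val_inj. Qed.
Lemma P_neq x y : x != y -> P x <> P y.
Proof. by move=> /eqP hxy h; apply: hxy; apply: P_inj. Qed.

Definition dist (x y : T) : nat := if P x <= P y then P y - P x else n + P y - P x.

Ltac dunf := rewrite /dist; repeat case: ifP; move=> *.

Lemma distxx x : dist x x = 0.
Proof. by rewrite /dist leqnn subnn. Qed.

Lemma dist_lt x y : dist x y < n.
Proof. have := P_lt x; have := P_lt y; rewrite /dist; case: ifP => *; lia. Qed.

Lemma dist_pos x y : x != y -> 0 < dist x y.
Proof. move=> /P_neq h; have := P_lt x; have := P_lt y; rewrite /dist; case: ifP => *; lia. Qed.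

Lemma dist_sym x y : x != y -> dist x y + dist y x = n.
Proof.
move=> /P_neq h; have := P_lt x; have := P_lt y; rewrite /dist.
case: ifP => h1; case: ifP => h2; lia.
Qed.

Lemma dist_inj x y z : dist x y = dist x z -> y = z.
Proof.
move=> h; apply: P_inj; move: h; have := P_lt x; have := P_lt y; have := P_lt z; rewrite /dist.
case: ifP => h1; case: ifP => h2; lia.
Qed.

Lemma dist_add u v w : u != v -> v != w -> u != w ->
  dist u v < dist u w -> dist u w = dist u v + dist v w.
Proof.
move=> /P_neq h1 /P_neq h2 /P_neq h3.
have := P_lt u; have := P_lt v; have := P_lt w; rewrite /dist.
case: ifP => a1; case: ifP => a2; case: ifP => a3; lia.
Qed.

Lemma cwE u v w : u != v -> v != w -> u != w ->
  cw pos u v w = (dist u v < dist u w).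
Proof.
move=> /P_neq h1 /P_neq h2 /P_neq h3.
have := P_lt u; have := P_lt v; have := P_lt w; rewrite /cw /dist -!/(P _) => ? ? ?.
case: ifP => a1; case: ifP => a2.
all: apply/idP/idP; lia.
Qed.

Lemma Pg (g : 'I_n -> T) : cancel g pos -> forall i, P (g i) = i.
Proof. by move=> h i; rewrite /P h. Qed.

Lemma sum_dist_l (R : Type) (idx : R) (op : Monoid.com_law idx) x (F : nat -> R) :
  \big[op/idx]_(y : T) F (dist x y) = \big[op/idx]_(i < n) F i.
Proof.
case: Hbij => g Hpg Hgp.
rewrite (reindex g); last by apply: onW_bij; exact: (Bijective Hgp Hpg).
have hr (i : 'I_n) : (if P x <= i then i - P x else n + i - P x) < n.
  by have := P_lt x; have := ltn_ord i; case: ifP => *; lia.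
pose h (i : 'I_n) := Ordinal (hr i).
have hinj : injective h.
  move=> i j /(congr1 val) /=; have := P_lt x; have := ltn_ord i; have := ltn_ord j.
  by case: ifP => ?; case: ifP => ? *; apply: ord_inj; lia.
rewrite [RHS](reindex_inj hinj); apply: eq_bigr => i _.
by rewrite /dist Pg.
Qed.

Lemma sum_dist_r (R : Type) (idx : R) (op : Monoid.com_law idx) x (F : nat -> R) :
  \big[op/idx]_(y : T) F (dist y x) = \big[op/idx]_(i < n) F i.
Proof.
case: Hbij => g Hpg Hgp.
rewrite (reindex g); last by apply: onW_bij; exact: (Bijective Hgp Hpg).
have hr (i : 'I_n) : (if i <= P x then P x - i else n + P x - i) < n.
  by have := P_lt x; have := ltn_ord i; case: ifP => *; lia.
pose h (i : 'I_n) := Ordinal (hr i).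
have hinj : injective h.
  move=> i j /(congr1 val) /=; have := P_lt x; have := ltn_ord i; have := ltn_ord j.
  by case: ifP => ?; case: ifP => ? *; apply: ord_inj; lia.
rewrite [RHS](reindex_inj hinj); apply: eq_bigr => i _.
by rewrite /dist Pg.
Qed.

Lemma Hint' u v w : e u w -> u != v -> v != w -> u != w ->
  dist u v < dist u w -> e u v && e v w.
Proof. by move=> h a b c d; apply: Hint => //; rewrite cwE. Qed.

Lemma between_r w x y : w != x -> x != y -> w != y ->
  dist x y < dist w y -> dist w x < dist w y.
Proof.
move=> /P_neq h1 /P_neq h2 /P_neq h3.
have := P_lt w; have := P_lt x; have := P_lt y; rewrite /dist.
case: ifP => a1; case: ifP => a2; case: ifP => a3; lia.
Qed.

Lemma neq_of_e x y : e x y -> x != y.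
Proof. by move=> h; apply: contraTneq h => ->; exact: Hl. Qed.

Lemma neq_of_dist x y : 0 < dist x y -> x != y.
Proof. by move=> h; apply: contraTneq h => ->; rewrite distxx. Qed.

Definition Q x := \max_(y | e x y) dist x y.
Definition Pi x := \max_(y | e y x) dist y x.

Lemma Q_wit x : 0 < Q x -> exists2 w, e x w & dist x w = Q x.
Proof.
rewrite /Q; case: (pickP (e x)) => [y hy|h0].
  move=> _; exists [arg max_(i > y | e x i) dist x i]; first by case: arg_maxnP.
  by rewrite (bigmax_eq_arg y hy).
by rewrite big_pred0.
Qed.

Lemma Pi_wit x : 0 < Pi x -> exists2 w, e w x & dist w x = Pi x.
Proof.
rewrite /Pi; case: (pickP (e^~ x)) => [y hy|h0].
  move=> _; exists [arg max_(i > y | e i x) dist i x]; first by case: arg_maxnP.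
  by rewrite (bigmax_eq_arg y hy).
by rewrite big_pred0.
Qed.

Lemma Q_lt x : Q x < n.
Proof.
have := P_lt x => hn.
have : Q x <= n.-1 by apply/bigmax_leqP => y _; have := dist_lt x y; lia.
lia.
Qed.

Lemma Pi_lt x : Pi x < n.
Proof.
have := P_lt x => hn.
have : Pi x <= n.-1 by apply/bigmax_leqP => y _; have := dist_lt y x; lia.
lia.
Qed.

Lemma outE x y : e x y = (0 < dist x y <= Q x).
Proof.
apply/idP/idP.
  move=> h; rewrite dist_pos ?neq_of_e //=; exact: leq_bigmax_cond.
case/andP => h0 hle.
have [w hw hdw] : exists2 w, e x w & dist x w = Q x by apply: Q_wit; lia.
case: (eqVneq y w) => [->//|hyw].
have hxy := neq_of_dist h0.
have hxw := neq_of_e hw.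
have hne : dist x y <> dist x w by move/dist_inj => /eqP; rewrite (negbTE hyw).
have hlt : dist x y < dist x w by lia.
by case/andP: (Hint' hw hxy hyw hxw hlt).
Qed.

Lemma inE' x y : e x y = (0 < dist x y <= Pi y).
Proof.
apply/idP/idP.
  move=> h; rewrite dist_pos ?neq_of_e //=; exact: (leq_bigmax_cond (P := e^~ y)).
case/andP => h0 hle.
have [w hw hdw] : exists2 w, e w y & dist w y = Pi y by apply: Pi_wit; lia.
case: (eqVneq x w) => [->//|hxw].
have hxy := neq_of_dist h0.
have hwy := neq_of_e hw.
have hne : dist x y <> dist w y.
  move=> h; move: hxw; rewrite (_ : x = w) ?eqxx //.
  move: h; have := P_lt x; have := P_lt y; have := P_lt w; rewrite /dist.
  by case: ifP => ?; case: ifP => ? *; apply: P_inj; lia.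
have hlt : dist x y < dist w y by lia.
have hwx : w != x by rewrite eq_sym.
have := between_r hwx hxy hwy hlt => hb.
by case/andP: (Hint' hw hwx hxy hwy hb).
Qed.

Lemma QPi x : Q x + Pi x < n.
Proof.
have := Q_lt x; have := Pi_lt x => h1 h2.
case: (posnP (Q x)) => hq; first by lia.
have [w hw hdw] := Q_wit hq.
have hxw := neq_of_e hw.
have hs := dist_sym hxw.
rewrite ltnNge; apply/negP => hge.
have : e w x by rewrite inE' dist_pos 1?eq_sym //=; lia.
move=> hwx; have := H2 hxw; by rewrite hw hwx.
Qed.

Lemma Amono x y : e x y -> Q x <= dist x y + Q y.
Proof.
move=> hxy.
case: (leqP (Q x) (dist x y)) => hq; first by lia.
have [w hw hdw] : exists2 w, e x w & dist x w = Q x by apply: Q_wit; lia.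
have nxy := neq_of_e hxy; have nxw := neq_of_e hw.
have nyw : y != w by apply: contraTneq hq => ->; rewrite hdw ltnn.
have hlt : dist x y < dist x w by lia.
case/andP: (Hint' hw nxy nyw nxw hlt) => _ hyw.
have := dist_add nxy nyw nxw hlt.
move: hyw; rewrite outE; lia.
Qed.

Lemma Bmono x y : e x y -> Pi y <= dist x y + Pi x.
Proof.
move=> hxy.
case: (leqP (Pi y) (dist x y)) => hq; first by lia.
have [w hw hdw] : exists2 w, e w y & dist w y = Pi y by apply: Pi_wit; lia.
have nxy := neq_of_e hxy; have nwy := neq_of_e hw.
have nwx : w != x by apply: contraTneq hq => hwx; rewrite -hdw hwx ltnn.
have hlt : dist x y < dist w y by lia.
have hb := between_r nwx nxy nwy hlt.
case/andP: (Hint' hw nwx nxy nwy hb) => hwx _.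
have := dist_add nwx nxy nwy hb.
move: hwx; rewrite inE'; lia.
Qed.

Lemma count_range N lo hi :
  \sum_(i < N) ((lo < i <= hi) : nat) = minn N hi.+1 - minn N lo.+1.
Proof.
elim: N => [|N IH]; first by rewrite big_ord0; lia.
rewrite big_ord_recr /= IH; case: (lo < N <= hi) /andP => [[h1 h2]|h]; lia.
Qed.

Definition tt x := n - 1 - Q x - Pi x.

Lemma range1 x y c : induced_P3 e (x, y, c) ->
  Q x < dist x c <= dist x y + Q y /\ dist x c < n - Pi x.
Proof.
case/and3P => nxy nyc /and5P[nxc hxy hyc hnxc hncx].
have hp := dist_pos nxc.
move: hnxc; rewrite outE hp /= -ltnNge => h1.
have hpc : 0 < dist c x by rewrite dist_pos // eq_sym.
move: hncx; rewrite inE' hpc /= -ltnNge => h2.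
have hs := dist_sym nxc.
move: hyc; rewrite outE => /andP[_ h3].
have hadd : dist x c = dist x y + dist y c.
  case: (ltnP (dist x y) (dist x c)) => hlt; first exact: dist_add.
  have hne : dist x c <> dist x y by move/dist_inj => hh; move: nyc; rewrite hh eqxx.
  have hlt' : dist x c < dist x y by lia.
  have ncy : c != y by rewrite eq_sym.
  case/andP: (Hint' hxy nxc ncy nxy hlt') => hh _.
  by move: hh; rewrite outE => /andP[_ hh']; lia.
lia.
Qed.

Lemma range2 a x y : induced_P3 e (a, x, y) ->
  Pi y < dist a y <= dist x y + Pi x /\ dist a y < n - Q y.
Proof.
case/and3P => nax nxy /and5P[nay hax hxy hnay hnya].
have hp := dist_pos nay.
move: hnay; rewrite inE' hp /= -ltnNge => h1.
have hpy : 0 < dist y a by rewrite dist_pos // eq_sym.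
move: hnya; rewrite outE hpy /= -ltnNge => h2.
have hs := dist_sym nay.
move: (hax); rewrite inE' => /andP[_ h3].
have hadd : dist a y = dist a x + dist x y.
  case: (ltnP (dist a x) (dist a y)) => hlt; first exact: dist_add.
  have hne : dist a y <> dist a x by move/dist_inj => hh; move: nxy; rewrite hh eqxx.
  have hlt' : dist a y < dist a x by lia.
  have nyx : y != x by rewrite eq_sym.
  case/andP: (Hint' hax nay nyx nax hlt') => hh _.
  by move: hh; rewrite inE' => /andP[_ hh']; lia.
lia.
Qed.

Lemma N1_bound x y :
  \sum_c (induced_P3 e (x, y, c) : nat) <= minn (dist x y + Q y - Q x) (tt x).
Proof.
have hqp := QPi x.
rewrite leq_min; apply/andP; split.
  apply: (@leq_trans (\sum_c ((Q x < dist x c <= dist x y + Q y) : nat))).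
    apply: leq_sum => c _; case H: (induced_P3 e (x, y, c)) => //=.
    by have [-> _] := range1 H.
  rewrite (sum_dist_l _ x (fun i => ((Q x < i <= dist x y + Q y) : nat))).
  rewrite count_range; lia.
apply: (@leq_trans (\sum_c ((Q x < dist x c <= n - 1 - Pi x) : nat))).
  apply: leq_sum => c _; case H: (induced_P3 e (x, y, c)) => //=.
  have [h1 h2] := range1 H.
  by have -> : (Q x < dist x c <= n - 1 - Pi x) = true by apply/andP; split; lia.
rewrite (sum_dist_l _ x (fun i => ((Q x < i <= n - 1 - Pi x) : nat))).
rewrite count_range /tt; lia.
Qed.

Lemma N2_bound x y :
  \sum_a (induced_P3 e (a, x, y) : nat) <= minn (dist x y + Pi x - Pi y) (tt y).
Proof.
have hqp := QPi y.
rewrite leq_min; apply/andP; split.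
  apply: (@leq_trans (\sum_a ((Pi y < dist a y <= dist x y + Pi x) : nat))).
    apply: leq_sum => a _; case H: (induced_P3 e (a, x, y)) => //=.
    by have [-> _] := range2 H.
  rewrite (sum_dist_r _ y (fun i => ((Pi y < i <= dist x y + Pi x) : nat))).
  rewrite count_range; lia.
apply: (@leq_trans (\sum_a ((Pi y < dist a y <= n - 1 - Q y) : nat))).
  apply: leq_sum => a _; case H: (induced_P3 e (a, x, y)) => //=.
  have [h1 h2] := range2 H.
  by have -> : (Pi y < dist a y <= n - 1 - Q y) = true by apply/andP; split; lia.
rewrite (sum_dist_r _ y (fun i => ((Pi y < i <= n - 1 - Q y) : nat))).
rewrite count_range /tt; lia.
Qed.

Lemma N_zero x y : ~~ e x y ->
  \sum_c (induced_P3 e (x, y, c) : nat) + \sum_a (induced_P3 e (a, x, y) : nat) = 0.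
Proof.
move=> h; rewrite !big1 // => c _; apply/eqP; rewrite eqb0 /induced_P3;
  by rewrite (negbTE h) !andbF.
Qed.

Lemma P3_sum : P3count e = \sum_a \sum_b \sum_c (induced_P3 e (a, b, c) : nat).
Proof.
rewrite /P3count -sum1_card big_mkcond /=.
rewrite (pair_big xpredT xpredT (fun a b => \sum_c (induced_P3 e (a, b, c) : nat))) /=.
rewrite (pair_big (fun p : T * T => true) xpredT (fun p c => (induced_P3 e (p.1, p.2, c) : nat))) /=.
apply: eq_bigr => -[[a b] c] _ /=; rewrite inE /=; set B := [&& _, _, _, _, _, _ & _]; by case: B.
Qed.

Lemma twoP3 : 2 * P3count e =
  \sum_x \sum_y (\sum_c (induced_P3 e (x, y, c) : nat) + \sum_a (induced_P3 e (a, x, y) : nat)).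
Proof.
rewrite mul2n -addnn {2}P3_sum {1}P3_sum.
rewrite [X in _ + X]exchange_big /=.
rewrite -big_split /=; apply: eq_bigr => x _.
rewrite [X in _ + X](eq_bigr (fun a => \sum_c (induced_P3 e (a, x, c) : nat))); last first.
  by move=> a _.
rewrite [X in _ + X]exchange_big /= -big_split //.
Qed.

Definition m := n.-1 %/ 4.
Definition gI v (d : nat) : int :=
  if d <= m then (Posz (2 * d) - Posz (Q v) + Posz (Pi v))%R else Posz (tt v).
Definition hI v (d : nat) : int :=
  if d <= m then (Posz (Q v) - Posz (Pi v))%R else Posz (tt v).

Lemma edge_bound x y : e x y ->
  (Posz (\sum_c (induced_P3 e (x, y, c) : nat) + \sum_a (induced_P3 e (a, x, y) : nat))
  <= gI x (dist x y) + hI y (dist x y))%R.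
Proof.
move=> h; have := N1_bound x y; have := N2_bound x y; have := Amono h; have := Bmono h.
rewrite /gI /hI; case: ifP => _; lia.
Qed.

Lemma sumZ (I : finType) (F : I -> nat) : Posz (\sum_i F i) = (\sum_i Posz (F i))%R.
Proof. exact: (big_morph Posz PoszD (erefl _)). Qed.

Lemma main_sum : (Posz (2 * P3count e) <=
  \sum_x \sum_(y | e x y) (gI x (dist x y) + hI y (dist x y)))%R.
Proof.
rewrite twoP3 sumZ; apply: (@ler_sum _ T (index_enum T) xpredT) => x _.
rewrite sumZ (big_mkcond (e x)).
apply: (@ler_sum _ T (index_enum T) xpredT) => y _; case: ifP => h; first exact: edge_bound.
by rewrite N_zero ?h.
Qed.

Definition Phi v : int :=
  (\sum_(i < n) (if (0 < i <= Q v)%N then gI v i else 0) +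
   \sum_(i < n) (if (0 < i <= Pi v)%N then hI v i else 0))%R.

Lemma regroup :
  (\sum_x \sum_(y | e x y) (gI x (dist x y) + hI y (dist x y)))%R = (\sum_v Phi v)%R.
Proof.
rewrite (eq_bigr (fun x => \sum_(y | e x y) gI x (dist x y) + \sum_(y | e x y) hI y (dist x y)))%R;
  last by move=> x _; rewrite big_split.
rewrite big_split /= /Phi big_split /=; congr (_ + _)%R.
  apply: eq_bigr => x _; rewrite big_mkcond /=.
  rewrite (eq_bigr (fun y => (fun i => if (0 < i <= Q x)%N then gI x i else 0) (dist x y)))%R;
    last by move=> y _; rewrite outE.
  exact: (sum_dist_l _ x (fun i => if (0 < i <= Q x)%N then gI x i else 0%R)).
rewrite (eq_bigr (fun x => \sum_y (if e x y then hI y (dist x y) else 0)))%R;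
  last by move=> x _; rewrite big_mkcond.
rewrite exchange_big /=; apply: eq_bigr => y _.
rewrite (eq_bigr (fun x => (fun i => if (0 < i <= Pi y)%N then hI y i else 0) (dist x y)))%R;
  last by move=> x _; rewrite inE'.
exact: (sum_dist_r _ y (fun i => if (0 < i <= Pi y)%N then hI y i else 0%R)).
Qed.

Lemma closed_ind (al be ga : int) (F : nat -> int) :
  (forall i, F i = if (i <= m)%N then (al * Posz (2 * i) + be)%R else ga) ->
  forall K, (\sum_(i < K.+1) (if (0 < i)%N then F i else 0) =
    al * Posz (minn K m * (minn K m + 1)) + be * Posz (minn K m) + ga * Posz (K - minn K m))%R.
Proof.
move=> HF; elim=> [|K IH].
  by rewrite big_ord1 /= min0n /= !mulr0 !addr0.
rewrite big_ord_recr IH HF.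
have -> : nat_of_ord (@ord_max K.+1) = K.+1 by [].
rewrite ltn0Sn.
case: (leqP K.+1 m) => h.
  rewrite (minn_idPl (ltnW h)) /=; lia.
have h' : (m <= K)%N by lia.
have E : Posz (K.+1 - m) = (Posz (K - m) + 1)%R by lia.
rewrite (minn_idPr h') /= E mulrDr mulr1; lia.
Qed.

Lemma closed_form (al be ga : int) (F : nat -> int) K :
  (forall i, F i = if (i <= m)%N then (al * Posz (2 * i) + be)%R else ga) -> (K < n)%N ->
  (\sum_(i < n) (if (0 < i <= K)%N then F i else 0) =
    al * Posz (minn K m * (minn K m + 1)) + be * Posz (minn K m) + ga * Posz (K - minn K m))%R.
Proof.
move=> HF hK; rewrite -(closed_ind HF K).
rewrite (big_ord_widen n (fun i => if (0 < i)%N then F i else 0%R) hK) [RHS]big_mkcond.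
by apply: eq_bigr => i _; rewrite ltnS; case: (0 < i)%N; case: (i <= K)%N.
Qed.

Lemma vertex_bound v : (8 * Phi v <= Posz (n * n))%R.
Proof.
rewrite /Phi (@closed_form 1 (Posz (Pi v) - Posz (Q v)) (Posz (tt v)) (gI v) (Q v)); first last.
- exact: Q_lt.
- by move=> i; rewrite /gI; case: ifP => _; lia.
rewrite (@closed_form 0 (Posz (Q v) - Posz (Pi v)) (Posz (tt v)) (hI v) (Pi v)); first last.
- exact: Pi_lt.
- by move=> i; rewrite /hI; case: ifP => _; lia.
have hqp := QPi v.
have hm1 : (4 * m <= n.-1)%N by rewrite /m; lia.
have hm2 : (n.-1 < 4 * m + 4)%N by rewrite /m; lia.
rewrite /tt mul0r add0r mul1r.
set a := minn (Q v) m; set b := minn (Pi v) m.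
have ha1 : (a <= Q v)%N by rewrite geq_minl.
have hb1 : (b <= Pi v)%N by rewrite geq_minl.
have E1 : Posz (a * (a + 1)) = (Posz a * (Posz a + 1))%R by rewrite PoszM PoszD.
have E2 : Posz (Q v - a) = (Posz (Q v) - Posz a)%R by lia.
have E3 : Posz (Pi v - b) = (Posz (Pi v) - Posz b)%R by lia.
have E4 : Posz (n - 1 - Q v - Pi v) = (Posz n - 1 - Posz (Q v) - Posz (Pi v))%R by lia.
have E5 : Posz (n * n) = (Posz n * Posz n)%R by rewrite PoszM.
rewrite E1 E2 E3 E4 E5.
apply: (@arith_final (Posz n) (Posz (Q v)) (Posz (Pi v)) (Posz m) (Posz a) (Posz b)); try lia.
Qed.

Lemma P3_bound : 16 * P3count e <= n ^ 3.
Proof.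
have h1 := main_sum; rewrite regroup in h1.
have h2 : (8 * \sum_v Phi v <= \sum_(v : T) Posz (n * n))%R.
  rewrite mulr_sumr; apply: (@ler_sum _ T (index_enum T) xpredT) => v _; exact: vertex_bound.
move: h2; rewrite sumr_const cardT -cardE Hcard -mulr_natr natz => h2.
have h3 : (8 * Posz (2 * P3count e) <= 8 * \sum_v Phi v)%R by rewrite ler_pM2l.
lia.
Qed.

End Circ.


Theorem theorem1 (T : finType) (e : rel T) :
  loopless e -> two_free e -> circular_interval e ->
  16 * P3count e <= #|T| ^ 3.
Proof.
move=> Hl H2 [pos [Hbij Hint]].
exact: (@P3_bound T e Hl H2 #|T| pos (erefl _) Hbij Hint).
Qed.
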